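(* Let $\mathcal{C}$ be any category. Let $l : K \to L$, $r : K \to R$, monomorphisms $t_L : L \rightarrowtail L'$, $t_K : K \rightarrowtail K'$, and $l' : K' \to L'$ be such that $L \xleftarrow{l} K \xrightarrow{t_K} K'$ is a pullback of $L \xrightarrow{t_L} L' \xleftarrow{l'} K'$. Let $G_L$ be an object, $\alpha : G_L \to L'$ and $m : L \to G_L$ morphisms such that $L \xleftarrow{1_L} L \xrightarrow{m} G_L$ is a pullback of $L \xrightarrow{t_L} L' \xleftarrow{\alpha} G_L$, and let $G_L \xleftarrow{g_L} G_K \xrightarrow{u'} K'$ be a pullback of $G_L \xrightarrow{\alpha} L' \xleftarrow{l'} K'$. Then there is a unique morphism $v : K \to G_K$ such that $t_K = u' \circ v$. *)

(* Defs.v *)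
Record Category : Type := {
  Ob :> Type;
  Hom : Ob -> Ob -> Type;
  comp : forall {a b c : Ob}, Hom b c -> Hom a b -> Hom a c;
  idm : forall a : Ob, Hom a a;
  comp_assoc : forall (a b c d : Ob) (f : Hom c d) (g : Hom b c) (h : Hom a b),
      comp f (comp g h) = comp (comp f g) h;
  comp_id_l : forall (a b : Ob) (f : Hom a b), comp (idm b) f = f;
  comp_id_r : forall (a b : Ob) (f : Hom a b), comp f (idm a) = f
}.

Arguments Hom {C} : rename.
Arguments comp {C a b c} : rename.
Arguments idm {C} : rename.

Notation "g \o f" := (comp g f) (at level 40, left associativity).

Definition mono {C : Category} {A B : C} (f : Hom A B) : Prop :=
  forall (X : C) (g h : Hom X A), f \o g = f \o h -> g = h.

Definition is_pullback {C : Category} {A B Z P : C}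
    (f : Hom A Z) (g : Hom B Z) (p1 : Hom P A) (p2 : Hom P B) : Prop :=
  f \o p1 = g \o p2 /\
  forall (X : C) (x1 : Hom X A) (x2 : Hom X B),
    f \o x1 = g \o x2 ->
    exists! h : Hom X P, p1 \o h = x1 /\ p2 \o h = x2.

(* Main.v *)
Require Import Defs.

Theorem lemma2 (C : Category) (K L R L' K' G_L G_K : C)
    (l : Hom K L) (r : Hom K R) (t_L : Hom L L') (t_K : Hom K K')
    (l' : Hom K' L')
    (Ht_L : mono t_L) (Ht_K : mono t_K)
    (Hpb1 : is_pullback t_L l' l t_K)
    (alpha : Hom G_L L') (m : Hom L G_L)
    (Hpb2 : is_pullback t_L alpha (idm L) m)
    (g_L : Hom G_K G_L) (u' : Hom G_K K')
    (Hpb3 : is_pullback alpha l' g_L u') :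
  exists! v : Hom K G_K, t_K = u' \o v.
Proof.
  destruct Hpb1 as [E1 _].
  destruct Hpb2 as [E2 U2].
  destruct Hpb3 as [E3 U3].
  rewrite comp_id_r in E2.
  assert (Hc : alpha \o (m \o l) = l' \o t_K).
  { rewrite comp_assoc, <- E2. exact E1. }
  destruct (U3 K (m \o l) t_K Hc) as [v [[Hv1 Hv2] Hvu]].
  exists v. split.
  - symmetry; exact Hv2.
  - intros w Hw.
    assert (Hg : g_L \o w = m \o l).
    { assert (Hc2 : t_L \o l = alpha \o (g_L \o w)).
      { rewrite comp_assoc, E3, <- comp_assoc, <- Hw. exact E1. }
      destruct (U2 K l (g_L \o w) Hc2) as [h [[Hh1 Hh2] _]].
      rewrite comp_id_l in Hh1. subst h. symmetry; exact Hh2. }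
    apply Hvu. split; [exact Hg | symmetry; exact Hw].
Qed.
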